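(* Let $\mathcal A,\mathcal B>0$, $\alpha,\beta\in(0,1)$, $h,\tau>0$. If $$\frac{\tau^{\alpha}(-\alpha^2+4\alpha-2)\mathcal A+\tau^{\beta}(-\beta^2+4\beta-2)\mathcal B}{h^2}\le\frac{37}{120},$$ then for every real $\theta$, with $s=\sin^2(\theta h/2)$, $$\mathcal P=\Big[1-\tfrac{8}{45}s^2\Big]-4g_1^{(\alpha,\beta)}s\Big[1+\tfrac13 s\Big]\ge0.$$
   Context: $\varpi_\ell^{(\sigma)}=(-1)^\ell\binom{\sigma}{\ell}$, $g_0^{(\sigma)}=\frac{1+\sigma}{2}\varpi_0^{(\sigma)}$, $g_\ell^{(\sigma)}=\frac{1+\sigma}{2}\varpi_\ell^{(\sigma)}+\frac{1-\sigma}{2}\varpi_{\ell-1}^{(\sigma)}$ ($\ell\ge1$); $\mu_\alpha=\tau^\alpha\mathcal A/h^2$, $\mu_\beta=\tau^\beta\mathcal B/h^2$, $g_\ell^{(\alpha,\beta)}=\mu_\alpha g_\ell^{(1-\alpha)}+\mu_\beta g_\ell^{(1-\beta)}$. *)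

(* Defs.v *)
From Stdlib Require Import Reals.
Open Scope R_scope.

Fixpoint gbinom (sigma : R) (l : nat) : R :=
  match l with
  | O => 1
  | S l' => gbinom sigma l' * (sigma - INR l') / INR (S l')
  end.

Definition varpi (sigma : R) (l : nat) : R := (-1) ^ l * gbinom sigma l.

Definition gcoef (sigma : R) (l : nat) : R :=
  match l with
  | O => (1 + sigma) / 2 * varpi sigma 0
  | S l' => (1 + sigma) / 2 * varpi sigma l + (1 - sigma) / 2 * varpi sigma l'
  end.

Definition mu (tau gam C h : R) : R := Rpower tau gam * C / h ^ 2.

Definition gab (A B alpha beta h tau : R) (l : nat) : R :=
  mu tau alpha A h * gcoef (1 - alpha) l + mu tau beta B h * gcoef (1 - beta) l.

(* Main.v *)
Require Import Defs.
From Stdlib Require Import Reals Lra Psatz.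
Open Scope R_scope.

Lemma gcoef1 (x : R) : gcoef (1 - x) 1 = (- x ^ 2 + 4 * x - 2) / 2.
Proof. unfold gcoef, varpi; simpl. field. Qed.

Theorem lemma6 (A B alpha beta h tau : R)
  (hA : 0 < A) (hB : 0 < B)
  (ha0 : 0 < alpha) (ha1 : alpha < 1) (hb0 : 0 < beta) (hb1 : beta < 1)
  (hh : 0 < h) (ht : 0 < tau)
  (hcond : (Rpower tau alpha * (- alpha ^ 2 + 4 * alpha - 2) * A
            + Rpower tau beta * (- beta ^ 2 + 4 * beta - 2) * B) / h ^ 2 <= 37 / 120) :
  forall theta : R,
    let s := sin (theta * h / 2) ^ 2 in
    0 <= (1 - 8 / 45 * s ^ 2) - 4 * gab A B alpha beta h tau 1 * s * (1 + 1 / 3 * s).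
Proof.
  intros theta s.
  assert (Hg : gab A B alpha beta h tau 1 =
    ((Rpower tau alpha * (- alpha ^ 2 + 4 * alpha - 2) * A
            + Rpower tau beta * (- beta ^ 2 + 4 * beta - 2) * B) / h ^ 2) / 2).
  { unfold gab, mu. rewrite !gcoef1. field. lra. }
  rewrite Hg.
  set (X := (Rpower tau alpha * (- alpha ^ 2 + 4 * alpha - 2) * A
            + Rpower tau beta * (- beta ^ 2 + 4 * beta - 2) * B) / h ^ 2) in *.
  assert (Hs0 : 0 <= s) by (unfold s; nra).
  assert (Hs1 : s <= 1).
  { unfold s. pose proof (sin2 (theta * h / 2)). pose proof (Rle_0_sqr (cos (theta*h/2))).
    unfold Rsqr in *. simpl. nra. }
  destruct (Rle_dec X 0).
  - nra.
  - assert (0 <= s * (1 + 1/3*s) <= 4/3) by nra.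
    nra.
Qed.
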